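(* Let $q\in(0,1)$ and let $W\in\mathbb{R}^{I\times I}$ be a nonnegative matrix with zero diagonal, $\mathbf{1}^*W\mathbf{1}=1$ and $W\mathbf{1}=W^*\mathbf{1}$. Consider the Asynchronous Asymmetric Gossip Algorithm: at each time $t$, independently of the past, an ordered pair $(i,j)$ is sampled with probability $W_{ij}$, then $x_i(t+1)=(1-q)x_i(t)+qx_j(t)$ and $x_k(t+1)=x_k(t)$ for $k\ne i$. Then for every $t\ge0$, $$\mathbb{E}[(\bar x(t)-\bar x(0))^2]\le\frac{q}{N(1-q)+q}V(x(0)).$$
   Context: $I$ is a finite set of $N$ nodes, $x(0)\in\mathbb{R}^I$ deterministic. $\mathbf{1}$ is the all-ones vector, $W^*$ the transpose. For $y\in\mathbb{R}^I$, $\bar y=\frac1N\sum_i y_i$ and $V(y)=\frac1N\sum_i(y_i-\bar y)^2$. *)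

(* Defs.v *)
From HB Require Import structures.
From mathcomp Require Import all_boot all_order all_algebra.
Set Implicit Arguments. Unset Strict Implicit. Unset Printing Implicit Defensive.
Import Order.TTheory GRing.Theory Num.Theory.
Local Open Scope ring_scope.

Definition avg (R : realFieldType) (I : finType) (y : I -> R) : R :=
  (\sum_(i : I) y i) / #|I|%:R.

Definition var (R : realFieldType) (I : finType) (y : I -> R) : R :=
  (\sum_(i : I) (y i - avg y) ^+ 2) / #|I|%:R.

Definition gossip_step (R : realFieldType) (I : finType) (q : R) (i j : I)
  (x : I -> R) : I -> R :=
  fun k => if k == i then (1 - q) * x i + q * x j else x k.

(* gossip_expect W q t f x0 = E[ f (x(t)) ] when x(0) = x0 and at each step an
   ordered pair (i,j) is drawn independently with probability W i j. *)
Fixpoint gossip_expect (R : realFieldType) (I : finType) (W : I -> I -> R)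
  (q : R) (t : nat) (f : (I -> R) -> R) (x : I -> R) : R :=
  match t with
  | 0%N => f x
  | t'.+1 => \sum_(i : I) \sum_(j : I) W i j * gossip_expect W q t' f (gossip_step q i j x)
  end.

(* Main.v *)
Require Import Defs.
From HB Require Import structures.
From mathcomp Require Import all_boot all_order all_algebra.
From mathcomp Require Import ring lra.
Import Order.TTheory GRing.Theory Num.Theory.
Set Implicit Arguments. Unset Strict Implicit.
Local Open Scope ring_scope.

Lemma ge_mono (R : realFieldType) (I : finType) (W : I -> I -> R) q
  (f g : (I -> R) -> R) :
  (forall i j, 0 <= W i j) -> (forall x, f x <= g x) ->
  forall t x, gossip_expect W q t f x <= gossip_expect W q t g x.
Proof.
move=> HW Hfg; elim=> [|t IH] x //=.
apply: ler_sum => i _; apply: ler_sum => j _.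
by apply: ler_wpM2l.
Qed.

Lemma ge_mart (R : realFieldType) (I : finType) (W : I -> I -> R) q
  (g : (I -> R) -> R) :
  (forall x, \sum_i \sum_j W i j * g (gossip_step q i j x) = g x) ->
  forall t x, gossip_expect W q t g x = g x.
Proof.
move=> Hg; elim=> [|t IH] x //=.
rewrite -[RHS]Hg; apply: eq_bigr => i _; apply: eq_bigr => j _.
by rewrite IH.
Qed.

Lemma sum_change (R : realFieldType) (I : finType) (i : I) (y z : I -> R)
  (F : R -> R) : (forall k, k != i -> z k = y k) ->
  \sum_k F (z k) = \sum_k F (y k) + (F (z i) - F (y i)).
Proof.
move=> H; rewrite (bigD1 i) //= [in RHS](bigD1 i) //=.
rewrite (eq_bigr (fun k => F (y k))); last by move=> k /H ->.
ring.
Qed.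

Lemma var_eq (R : realFieldType) (I : finType) (y : I -> R) :
  #|I|%:R != 0 :> R ->
  var y = (\sum_k y k ^+ 2) / #|I|%:R - avg y ^+ 2.
Proof.
move=> Hn; rewrite /var.
have -> : \sum_i (y i - avg y) ^+ 2 =
  \sum_i y i ^+ 2 - 2 * avg y * \sum_i y i + (avg y ^+ 2) *+ #|I|.
  rewrite -sumr_const mulr_sumr -sumrB -big_split /=.
  by apply: eq_bigr => i _; ring.
rewrite /avg; rewrite -mulr_natr; field; exact: Hn.
Qed.

Lemma balance0 (R : realFieldType) (I : finType) (W : I -> I -> R) (g : I -> R) :
  (forall i, \sum_(j : I) W i j = \sum_(j : I) W j i) ->
  \sum_i \sum_j W i j * (g j - g i) = 0.
Proof.
move=> Hb.
have -> : \sum_i \sum_j W i j * (g j - g i) =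
  \sum_i \sum_j W i j * g j - \sum_i g i * \sum_j W i j.
  rewrite -sumrB; apply: eq_bigr => i _.
  rewrite mulr_sumr -sumrB; apply: eq_bigr => j _; ring.
have -> : \sum_i g i * \sum_j W i j = \sum_i g i * \sum_j W j i.
  by apply: eq_bigr => i _; rewrite Hb.
rewrite exchange_big /=.
apply/eqP; rewrite subr_eq0; apply/eqP; apply: eq_bigr => j _; rewrite mulr_sumr; apply: eq_bigr => i _.
ring.
Qed.

Theorem mainTheorem10 (R : realFieldType) (I : finType) (q : R)
  (W : I -> I -> R) (x0 : I -> R) :
  0 < q -> q < 1 ->
  (forall i j, 0 <= W i j) ->
  (forall i, W i i = 0) ->
  \sum_(i : I) \sum_(j : I) W i j = 1 ->
  (forall i, \sum_(j : I) W i j = \sum_(j : I) W j i) ->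
  forall t : nat,
    gossip_expect W q t (fun x => (avg x - avg x0) ^+ 2) x0
      <= q / (#|I|%:R * (1 - q) + q) * var x0.
Proof.
move=> q0 q1 HW Wii Hs Hb t.
have [i0 _] : exists i : I, true.
  case: (pickP (@predT I)) => [i _|h]; first by exists i.
  exfalso; move: Hs; rewrite big_pred0.
    by move/eqP; rewrite eq_sym oner_eq0.
  by move=> k; have := h k.
have npos : (0 < #|I|)%N by apply/card_gt0P; exists i0.
set n := #|I|%:R : R.
have n0 : 0 < n by rewrite /n ltr0n.
have nn0 : n != 0 by rewrite gt_eqF.
have d0 : 0 < n * (1 - q) + q.
  apply: ltr_wpDl => //; apply: mulr_ge0; [exact: ltW | lra].
have dn0 : n * (1 - q) + q != 0 by rewrite gt_eqF.
set a := q / (n * (1 - q) + q).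
have a0 : 0 <= a by apply: divr_ge0; apply: ltW.
set c := avg x0.
pose Phi := fun y : I -> R => (avg y - c) ^+ 2 + a * var y.
have varge0 : forall y : I -> R, 0 <= var y.
  move=> y; rewrite /var; apply: divr_ge0; last exact: ltW.
  by apply: sumr_ge0 => i _; apply: sqr_ge0.
apply: (@le_trans _ _ (gossip_expect W q t Phi x0)).
  apply: ge_mono => // y; rewrite /Phi lerDl; exact: mulr_ge0.
rewrite ge_mart; last first.
  move=> x.
  pose A := 2 * q * ((avg x - c) - a * avg x) / n.
  pose B := a * q / n.
  have step : forall i j, Phi (gossip_step q i j x) =
      Phi x + (A * x j - A * x i) + (B * x j ^+ 2 - B * x i ^+ 2).
    move=> i j.
    have Hz : forall k, k != i -> gossip_step q i j x k = x k.
      by move=> k /negPf hk; rewrite /gossip_step hk.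
    have Hzi : gossip_step q i j x i = (1 - q) * x i + q * x j.
      by rewrite /gossip_step eqxx.
    rewrite /Phi !var_eq // /avg.
    rewrite (sum_change (fun r => r) Hz) (sum_change (fun r => r ^+ 2) Hz) Hzi.
    rewrite -/n /A /B /a /avg -/n.
    field; by apply/andP.
  rewrite (eq_bigr (fun i => \sum_j (W i j * Phi x +
       (W i j * (A * x j - A * x i) + W i j * (B * x j ^+ 2 - B * x i ^+ 2))))); last first.
    move=> i _; apply: eq_bigr => j _; rewrite step; ring.
  rewrite (eq_bigr (fun i => \sum_j W i j * Phi x + (\sum_j W i j * (A * x j - A * x i)
       + \sum_j W i j * (B * x j ^+ 2 - B * x i ^+ 2)))); last first.
    by move=> i _; rewrite !big_split.
  rewrite !big_split /= (balance0 (fun k => A * x k) Hb) (balance0 (fun k => B * x k ^+ 2) Hb).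
  have -> : \sum_i \sum_j W i j * Phi x = (\sum_i \sum_j W i j) * Phi x.
    by rewrite mulr_suml; apply: eq_bigr => i _; rewrite mulr_suml.
  by rewrite Hs mul1r !addr0.
by rewrite /Phi /c subrr expr2 mul0r add0r.
Qed.
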